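(* For every object $\bar d=\{1,\dots,d\}$ of the augmented simplex category, the following assignment on generators defines an opposite $\mathcal{S}$-bialgebra structure, i.e. a prop morphism $\mathcal{S}\to\mathrm{End}^{\mathrm{op}}(\mathrm{C}^a_\bullet(\Delta^d_+))$, natural with respect to augmented simplicial maps: (i) $\varepsilon\mapsto$ the map in $\mathrm{Hom}(k,\mathrm{C}^a_\bullet(\Delta^d_+))_0$ given by $1\mapsto[\emptyset]$; (ii) $\Delta\mapsto$ the join map in $\mathrm{Hom}(\mathrm{C}^a_\bullet(\Delta^d_+)^{\otimes2},\mathrm{C}^a_\bullet(\Delta^d_+))_0$, $[v_0,\dots,v_p]\otimes[v_{p+1},\dots,v_q]\mapsto\mathrm{sign}(\pi)\,[v_{\pi(0)},\dots,v_{\pi(q)}]$ if the vertices are pairwise distinct and $\mapsto0$ otherwise, where $\pi$ is the permutation ordering the vertices increasingly; (iii) $\mu\mapsto$ the map in $\mathrm{Hom}(\mathrm{C}^a_\bullet(\Delta^d_+),\mathrm{C}^a_\bullet(\Delta^d_+)^{\otimes2})_1$, $[v_0,\dots,v_q]\mapsto\sum_{i=0}^q(-1)^i[v_0,\dots,v_i]\otimes[v_i,\dots,v_q]$ (and $[\emptyset]\mapsto0$).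
   Context: Fix a commutative ring $k$; chain complexes over $k$ with the Koszul sign rule. A prop $\mathcal{P}$ is a strict symmetric monoidal category enriched in chain complexes generated by one object, $\mathcal{P}(n,m)$ the complex of morphisms from $n$ to $m$ copies; $\circ$ vertical, $\otimes$ horizontal composition, $\mathrm{id}\in\mathcal{P}(1,1)$. For a chain complex $C$, $\mathrm{End}^{\mathrm{op}}(C)$ is the prop with $\mathrm{End}^{\mathrm{op}}(C)(n,m)=\mathrm{Hom}(C^{\otimes m},C^{\otimes n})$ (Hom complex with $(\partial f)=\partial\circ f-(-1)^{|f|}f\circ\partial$); a prop morphism $\mathcal{P}\to\mathrm{End}^{\mathrm{op}}(C)$ is an opposite $\mathcal{P}$-bialgebra. The prop $\mathcal{S}$: free prop on the free $\Sigma$-bimodule generated by $\varepsilon\in\mathcal{S}(1,0)_0$, $\Delta\in\mathcal{S}(1,2)_0$, $\mu\in\mathcal{S}(2,1)_1$, with derivation differential $\partial\varepsilon=0$, $\partial\Delta=0$, $\partial\mu=(\varepsilon\otimes\mathrm{id})-(\mathrm{id}\otimes\varepsilon)$, modulo the dg prop ideal generated by $\varepsilon\circ\mu$, $(\varepsilon\otimes\mathrm{id})\circ\Delta-\mathrm{id}$, $(\mathrm{id}\otimes\varepsilon)\circ\Delta-\mathrm{id}$. The augmented simplex category $\Delta_+$ has objects $\bar0=\emptyset,\bar1=\{1\},\bar2=\{1,2\},\dots$ and order-preserving maps. $\mathrm{C}^a_\bullet(\Delta^d_+)$ is the normalized augmented chain complex of the standard augmented simplex on $\bar d$: basis the symbols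 $[v_0,\dots,v_q]$ for strictly increasing sequences of elements of $\bar d$, including the empty simplex $[\emptyset]$, graded by cardinality (so $[\emptyset]$ has degree $0$ and $[v_0,\dots,v_q]$ degree $q+1$), symbols with repeated vertices being $0$, with differential $\partial[v_0,\dots,v_q]=\sum_i(-1)^i[v_0,\dots,\widehat{v_i},\dots,v_q]$, in particular $\partial[v]=[\emptyset]$. Naturality means compatibility with the chain maps induced by order-preserving maps $\bar d\to\bar e$. *)

(* Defs.v *)
From HB Require Import structures.
From mathcomp Require Import all_boot all_order all_algebra.
Set Implicit Arguments. Unset Strict Implicit. Unset Printing Implicit Defensive.
Import GRing.Theory.
Local Open Scope ring_scope.

(* Free graded k-modules with a finite basis B are represented as
   coordinate vectors {ffun B -> k}; k-linear maps are given by their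
   values on basis vectors and extended linearly. *)
Notation vec k B := ({ffun B -> GRing.ComPzRing.sort k}) (only parsing).

Section Free.
Variable k : comPzRingType.


Definition bv (B : finType) (b : B) : vec k B := [ffun b' => (b' == b)%:R].

Definition ext (B1 B2 : finType) (f : B1 -> vec k B2) (x : vec k B1) : vec k B2 :=
  [ffun b2 => \sum_(b : B1) x b * f b b2].

Definition scl (B : finType) (c : k) (x : vec k B) : vec k B :=
  [ffun b => c * x b].

Definition tens (B1 B2 : finType) (x : vec k B1) (y : vec k B2) : vec k (B1 * B2) :=
  [ffun p => x p.1 * y p.2].

Definition homog (B1 B2 : finType) (deg1 : B1 -> nat) (deg2 : B2 -> nat)
  (n : nat) (f : B1 -> vec k B2) :=
  forall b b', f b b' != 0 -> deg2 b' = (deg1 b + n)%N.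

(* Differential of C (x) C with the Koszul sign rule, on basis elements *)
Definition bd2 (B : finType) (deg : B -> nat) (bd : B -> vec k B) (p : B * B)
  : vec k (B * B) :=
  tens (bd p.1) (bv p.2) + scl ((-1) ^+ deg p.1) (tens (bv p.1) (bd p.2)).

(* An opposite S-bialgebra structure on the free chain complex (B, deg, bd),
   i.e. a prop morphism S -> End^op(C), given by the images of the
   generators eps : k -> C (degree 0), Delta : C(x)C -> C (degree 0),
   mu : C -> C(x)C (degree 1).  The basis of k = C^{(x)0} is unit.
   Since S is the free prop on eps, Delta, mu modulo the dg ideal generated
   by the three relations, such a morphism is exactly an assignment of
   maps of the right degrees commuting with the differentials as
   prescribed and satisfying the relations. *)
Definition opp_S_bialgebra (B : finType) (deg : B -> nat) (bd : B -> vec k B)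
  (eps : unit -> vec k B) (Delta : B * B -> vec k B) (mu : B -> vec k (B * B)) :=
  [/\ homog (fun _ => 0%N) deg 0 eps,
      homog (fun p => deg p.1 + deg p.2)%N deg 0 Delta &
      homog deg (fun p => deg p.1 + deg p.2)%N 1 mu] /\
  [/\
      ext bd (eps tt) = 0,
      (forall p, ext bd (Delta p) = ext Delta (bd2 deg bd p)) &
      (* d mu = (eps (x) id) - (id (x) eps) :
         (d mu) = bd2 o mu - (-1)^1 mu o bd *)
      (forall b, ext (bd2 deg bd) (mu b) + ext mu (bd b)
                 = tens (eps tt) (bv b) - tens (bv b) (eps tt))] /\
  (* relations: images of eps o mu, (eps (x) id) o Delta - id,
     (id (x) eps) o Delta - id in End^op vanish *)
  [/\ ext mu (eps tt) = 0,
      (forall b, ext Delta (tens (eps tt) (bv b)) = bv b) &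
      (forall b, ext Delta (tens (bv b) (eps tt)) = bv b)].

End Free.

(* Vertex set dbar = {1,..,d} is 'I_d; a simplex [v_0,...,v_q] with
   v_0 < ... < v_q is the set {v_0,...,v_q}; [emptyset] is set0. *)
Definition simp (d : nat) := {set 'I_d}.

Definition verts (d : nat) (S : simp d) : seq 'I_d :=
  [seq v <- enum 'I_d | v \in S].

Definition sdeg (d : nat) (S : simp d) : nat := #|S|.

(* number of inversions of a sequence of vertices; (-1)^inversions is the
   sign of the permutation ordering it increasingly *)
Definition inversions (d : nat) (s : seq 'I_d) : nat :=
  let t := map val s in
  #|[set ij : 'I_(size s) * 'I_(size s) |
      (ij.1 < ij.2)%N && (nth 0%N t ij.2 < nth 0%N t ij.1)%N]|.

Section Chains.
Variable k : comPzRingType.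
Local Notation C d := (vec k (simp d)).

Definition sbd (d : nat) (S : simp d) : C d :=
  \sum_(v <- verts S) scl ((-1) ^+ index v (verts S)) (bv k (S :\ v)).

Definition seps (d : nat) (_ : unit) : C d := bv k (set0 : simp d).

Definition sjoin (d : nat) (p : simp d * simp d) : C d :=
  if [disjoint p.1 & p.2]
  then scl ((-1) ^+ inversions (verts p.1 ++ verts p.2)) (bv k (p.1 :|: p.2))
  else 0.

Definition smu (d : nat) (S : simp d) : vec k (simp d * simp d) :=
  \sum_(v <- verts S) scl ((-1) ^+ index v (verts S))
     (tens (bv k [set u in S | (u <= v)%N]) (bv k [set u in S | (v <= u)%N])).

(* chain map induced by an order-preserving f : dbar -> ebar on normalized
   chains: [v_0..v_q] |-> [f v_0 .. f v_q], which is 0 when degenerate *)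
Definition sfun (d e : nat) (f : 'I_d -> 'I_e) (S : simp d) : C e :=
  if #|f @: S| == #|S| then bv k (f @: S) else 0.

End Chains.

(* Main.v *)
Require Import Defs.
From HB Require Import structures.
From mathcomp Require Import all_boot all_order all_algebra.
From mathcomp Require Import ring zify.
Import GRing.Theory.
Local Open Scope ring_scope.

Module A.
Import GRing.Theory.
Local Open Scope ring_scope.
Set Implicit Arguments. Unset Strict Implicit. Unset Printing Implicit Defensive.

Section Lin.
Variable k : comPzRingType.
Implicit Types B : finType.

Lemma scl_add B c (x y : {ffun B -> k}) : scl c (x + y) = scl c x + scl c y.
Proof. by apply/ffunP=> b; rewrite !ffunE mulrDr. Qed.
Lemma scl_addc B c c' (x : {ffun B -> k}) : scl (c + c') x = scl c x + scl c' x.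
Proof. by apply/ffunP=> b; rewrite !ffunE mulrDl. Qed.
Lemma scl0 B c : scl c (0 : {ffun B -> k}) = 0.
Proof. by apply/ffunP=> b; rewrite !ffunE mulr0. Qed.
Lemma scl0c B (x : {ffun B -> k}) : scl 0 x = 0.
Proof. by apply/ffunP=> b; rewrite !ffunE mul0r. Qed.
Lemma sclA B c c' (x : {ffun B -> k}) : scl c (scl c' x) = scl (c * c') x.
Proof. by apply/ffunP=> b; rewrite !ffunE mulrA. Qed.
Lemma scl1 B (x : {ffun B -> k}) : scl 1 x = x.
Proof. by apply/ffunP=> b; rewrite !ffunE mul1r. Qed.
Lemma sclN B c (x : {ffun B -> k}) : scl c (- x) = - scl c x.
Proof. by apply/ffunP=> b; rewrite !ffunE mulrN. Qed.
Lemma sclNc B c (x : {ffun B -> k}) : scl (- c) x = - scl c x.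
Proof. by apply/ffunP=> b; rewrite !ffunE mulNr. Qed.
Lemma scl_sum B I (r : seq I) (P : pred I) c (F : I -> {ffun B -> k}) :
  scl c (\sum_(i <- r | P i) F i) = \sum_(i <- r | P i) scl c (F i).
Proof. by apply/ffunP=> b; rewrite !ffunE !sum_ffunE big_distrr; apply: eq_bigr => i _; rewrite ffunE. Qed.

Lemma extE B1 B2 (f : B1 -> {ffun B2 -> k}) x : ext f x = \sum_b scl (x b) (f b).
Proof. by apply/ffunP=> b; rewrite !ffunE sum_ffunE; apply: eq_bigr => i _; rewrite ffunE. Qed.
Lemma ext_add (B1 B2 : finType) (f : B1 -> {ffun B2 -> k}) x y : ext f (x + y) = ext f x + ext f y.
Proof. by rewrite !extE -big_split; apply: eq_bigr => b _; rewrite ffunE scl_addc. Qed.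
Lemma ext0 (B1 B2 : finType) (f : B1 -> {ffun B2 -> k}) : ext f 0 = 0.
Proof. by rewrite !extE big1 // => b _; rewrite ffunE scl0c. Qed.
Lemma ext_scl (B1 B2 : finType) (f : B1 -> {ffun B2 -> k}) c x : ext f (scl c x) = scl c (ext f x).
Proof. by rewrite !extE scl_sum; apply: eq_bigr => b _; rewrite ffunE sclA. Qed.
Lemma extN B1 B2 (f : B1 -> {ffun B2 -> k}) x : ext f (- x) = - ext f x.
Proof. by rewrite !extE -sumrN; apply: eq_bigr => b _; rewrite ffunE sclNc. Qed.
Lemma ext_sum (B1 B2 : finType) (f : B1 -> {ffun B2 -> k}) I (r : seq I) (P : pred I) F :
  ext f (\sum_(i <- r | P i) F i) = \sum_(i <- r | P i) ext f (F i).
Proof.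
elim/big_rec2: _ => [|i y1 y2 _ <-]; first by rewrite ext0.
by rewrite ext_add.
Qed.
Lemma ext_bv (B1 B2 : finType) (f : B1 -> {ffun B2 -> k}) b : ext f (bv k b) = f b.
Proof.
rewrite extE (bigD1 b) //= big1 => [|b' nb]; last by rewrite ffunE (negbTE nb) scl0c.
by rewrite addr0 ffunE eqxx scl1.
Qed.
Lemma ext_comp (B1 B2 B3 : finType) (f : B2 -> {ffun B3 -> k}) (g : B1 -> {ffun B2 -> k}) x :
  ext f (ext g x) = ext (fun b => ext f (g b)) x.
Proof.
rewrite [ext g x]extE ext_sum [RHS]extE; apply: eq_bigr => b _.
by rewrite ext_scl.
Qed.
Lemma ext_eq (B1 B2 : finType) (f g : B1 -> {ffun B2 -> k}) x : f =1 g -> ext f x = ext g x.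
Proof. by move=> fg; rewrite !extE; apply: eq_bigr => b _; rewrite fg. Qed.
Lemma ext_fadd (B1 B2 : finType) (f g : B1 -> {ffun B2 -> k}) x :
  ext (fun b => f b + g b) x = ext f x + ext g x.
Proof. by rewrite !extE -big_split; apply: eq_bigr => b _; rewrite scl_add. Qed.
Lemma ext_fscl (B1 B2 : finType) (f : B1 -> {ffun B2 -> k}) c x :
  ext (fun b => scl c (f b)) x = scl c (ext f x).
Proof. by rewrite !extE scl_sum; apply: eq_bigr => b _; rewrite !sclA mulrC. Qed.
Lemma ext_fN B1 B2 (f : B1 -> {ffun B2 -> k}) x :
  ext (fun b => - f b) x = - ext f x.
Proof. by rewrite !extE -sumrN; apply: eq_bigr => b _; rewrite sclN. Qed.
Lemma ext_f0 (B1 B2 : finType) x : ext (fun _ : B1 => (0 : {ffun B2 -> k})) x = 0.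
Proof. by rewrite !extE big1 // => b _; rewrite scl0. Qed.
Lemma ext_id B (x : {ffun B -> k}) : ext (@bv k B) x = x.
Proof.
apply/ffunP=> b; rewrite ffunE (bigD1 b) //= big1 => [|b' nb].
  by rewrite ffunE eqxx mulr1 addr0.
by rewrite ffunE eq_sym (negbTE nb) mulr0.
Qed.

Lemma tens_addl (B1 B2 : finType) (x y : {ffun B1 -> k}) (z : {ffun B2 -> k}) :
  tens (x + y) z = tens x z + tens y z.
Proof. by apply/ffunP=> b; rewrite !ffunE mulrDl. Qed.
Lemma tens_addr (B1 B2 : finType) (x : {ffun B1 -> k}) (y z : {ffun B2 -> k}) :
  tens x (y + z) = tens x y + tens x z.
Proof. by apply/ffunP=> b; rewrite !ffunE mulrDr. Qed.
Lemma tens_scll (B1 B2 : finType) c (x : {ffun B1 -> k}) (z : {ffun B2 -> k}) :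
  tens (scl c x) z = scl c (tens x z).
Proof. by apply/ffunP=> b; rewrite !ffunE mulrA. Qed.
Lemma tens_sclr (B1 B2 : finType) c (x : {ffun B1 -> k}) (z : {ffun B2 -> k}) :
  tens x (scl c z) = scl c (tens x z).
Proof. by apply/ffunP=> b; rewrite !ffunE mulrCA. Qed.
Lemma tens0l (B1 B2 : finType) (z : {ffun B2 -> k}) : tens (0 : {ffun B1 -> k}) z = 0.
Proof. by apply/ffunP=> b; rewrite !ffunE mul0r. Qed.
Lemma tens0r (B1 B2 : finType) (z : {ffun B1 -> k}) : tens z (0 : {ffun B2 -> k}) = 0.
Proof. by apply/ffunP=> b; rewrite !ffunE mulr0. Qed.
Lemma tensNl B1 B2 (x : {ffun B1 -> k}) (z : {ffun B2 -> k}) : tens (- x) z = - tens x z.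
Proof. by apply/ffunP=> b; rewrite !ffunE mulNr. Qed.
Lemma tensNr B1 B2 (x : {ffun B1 -> k}) (z : {ffun B2 -> k}) : tens x (- z) = - tens x z.
Proof. by apply/ffunP=> b; rewrite !ffunE mulrN. Qed.
Lemma tens_suml (B1 B2 : finType) I (r : seq I) (P : pred I) (F : I -> {ffun B1 -> k}) (z : {ffun B2 -> k}) :
  tens (\sum_(i <- r | P i) F i) z = \sum_(i <- r | P i) tens (F i) z.
Proof.
elim/big_rec2: _ => [|i y1 y2 _ <-]; first by rewrite tens0l.
by rewrite tens_addl.
Qed.
Lemma tens_sumr (B1 B2 : finType) I (r : seq I) (P : pred I) (F : I -> {ffun B2 -> k}) (z : {ffun B1 -> k}) :
  tens z (\sum_(i <- r | P i) F i) = \sum_(i <- r | P i) tens z (F i).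
Proof.
elim/big_rec2: _ => [|i y1 y2 _ <-]; first by rewrite tens0r.
by rewrite tens_addr.
Qed.
Lemma tens_bv (B1 B2 : finType) (a : B1) (b : B2) : tens (bv k a) (bv k b) = bv k (a, b).
Proof.
apply/ffunP=> [[x y]]; rewrite !ffunE /= xpair_eqE.
by case: (x == a); case: (y == b); rewrite ?mulr1 ?mulr0 ?mul0r.
Qed.
Lemma ext_tens (B1 B2 B3 : finType) (f : B1 * B2 -> {ffun B3 -> k}) x y :
  ext f (tens x y) = ext (fun a => ext (fun b => f (a, b)) y) x.
Proof.
rewrite [RHS]extE extE.
rewrite (eq_bigr (fun a => \sum_b scl (x a) (scl (y b) (f (a, b))))); last first.
  by move=> a _; rewrite extE scl_sum.
rewrite pair_big /=; apply: eq_bigr => [[a b]] _.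
by rewrite ffunE sclA.
Qed.
End Lin.

End A.
Import A.

Module B.
Import GRing.Theory.
Local Open Scope ring_scope.
Set Implicit Arguments. Unset Strict Implicit. Unset Printing Implicit Defensive.

Section Comb.
Variable k : comPzRingType.
Variable d : nat.
Local Notation V := {ffun simp d -> k}.
Definition sg (n : nat) : k := (-1) ^+ n.
Lemma sgD m n : sg (m + n) = sg m * sg n. Proof. by rewrite /sg exprD. Qed.
Lemma sgsq n : sg n * sg n = 1.
Proof. by rewrite /sg -exprMn mulrNN mulr1 expr1n. Qed.

Definition ltO : rel 'I_d := fun a b => (a < b)%N.
Lemma ltO_trans : transitive ltO.
Proof. by move=> a b c; rewrite /ltO; apply: ltn_trans. Qed.
Lemma ltO_irr : irreflexive ltO.
Proof. by move=> a; rewrite /ltO ltnn. Qed.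

Definition lts (S : simp d) (v : 'I_d) := #|[set u in S | (u < v)%N]|.
Definition cone (x : 'I_d) (U : simp d) : V :=
  if x \in U then 0 else scl (sg (lts U x)) (bv k (x |: U)).

Lemma verts_uniq (S : simp d) : uniq (verts S).
Proof. by rewrite filter_uniq // enum_uniq. Qed.
Lemma mem_verts (S : simp d) v : (v \in verts S) = (v \in S).
Proof. by rewrite mem_filter mem_enum andbT. Qed.
Lemma verts_sorted (S : simp d) : sorted ltO (verts S).
Proof.
apply: sorted_filter; first exact: ltO_trans.
have := iota_ltn_sorted 0 d; rewrite -val_enum_ord sorted_map; done.
Qed.
Lemma card_seq (s : seq 'I_d) : uniq s -> #|[set x in s]| = size s.
Proof. by move=> u; rewrite cardsE; apply/card_uniqP. Qed.
Lemma set_verts (S : simp d) : [set x in verts S] = S.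
Proof. by apply/setP=> v; rewrite inE mem_verts. Qed.
Lemma size_verts (S : simp d) : size (verts S) = #|S|.
Proof. by rewrite -card_seq ?verts_uniq // set_verts. Qed.

Lemma index_sorted (s : seq 'I_d) v : sorted ltO s -> v \in s ->
  index v s = count (fun u : 'I_d => (u < v)%N) s.
Proof.
elim: s => [//|y t IH] /=; rewrite (path_sortedE ltO_trans) => /andP [ay st].
rewrite in_cons; case: eqP => [-> _|nvy /= vt].
  rewrite eqxx ltnn /= (@eq_in_count _ _ pred0) ?count_pred0 // => u ut /=.
  move/allP: ay => /(_ u ut); rewrite /ltO => h.
  by rewrite ltnNge ltnW.
rewrite IH //; move/allP: ay => /(_ v vt); rewrite /ltO => ->; by case: eqP => // e; case: nvy.
Qed.

Lemma index_verts (S : simp d) v : v \in S -> index v (verts S) = lts S v.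
Proof.
move=> vS; rewrite index_sorted ?verts_sorted ?mem_verts //.
rewrite /lts -size_filter -card_seq; last by rewrite filter_uniq // verts_uniq.
  by apply: eq_card => u; rewrite !inE mem_filter mem_verts andbC.
Qed.

Lemma sbd_set (S : simp d) :
  sbd k S = \sum_(v in S) scl (sg (lts S v)) (bv k (S :\ v)).
Proof.
rewrite /sbd {1}/verts big_filter big_enum_cond /=.
rewrite (eq_bigl (fun v => v \in S)) => [|v]; last by [].
by apply: eq_bigr => v vS; rewrite index_verts.
Qed.

Lemma lts_D1 (U : simp d) x : lts (U :\ x) x = lts U x.
Proof.
rewrite /lts; apply: eq_card => u; rewrite !inE.
by case: eqP => [->|_] /=; rewrite ?ltnn ?andbF.
Qed.
Lemma lts_U1x (U : simp d) x : lts (x |: U) x = lts U x.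
Proof.
rewrite /lts; apply: eq_card => u; rewrite !inE.
by case: eqP => [->|_] /=; rewrite ?ltnn ?andbF.
Qed.
Lemma lts_U1 (U : simp d) x v : x \notin U ->
  lts (x |: U) v = ((x < v)%N + lts U v)%N.
Proof.
move=> xU; rewrite /lts.
case h: (x < v)%N.
  have -> : [set u in x |: U | (u < v)%N] = x |: [set u in U | (u < v)%N].
    by apply/setP=> u; rewrite !inE; case: eqP => [->|]; rewrite ?h.
  by rewrite cardsU1 inE (negbTE xU).
apply: eq_card => u; rewrite !inE; case: eqP => [->|_] /=; rewrite ?h ?andbF //.
Qed.
Lemma lts_D1v (U : simp d) x v : v \in U ->
  lts U x = ((v < x)%N + lts (U :\ v) x)%N.
Proof.
move=> vU; rewrite /lts.
case h: (v < x)%N.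
  have -> : [set u in U | (u < x)%N] = v |: [set u in U :\ v | (u < x)%N].
    by apply/setP=> u; rewrite !inE; case: eqP => [->|]; rewrite ?h ?vU.
  by rewrite cardsU1 !inE eqxx.
apply: eq_card => u; rewrite !inE; case: eqP => [->|_] /=; rewrite ?h ?andbF //.
Qed.

Lemma cone_lemma x (U : simp d) :
  ext (@sbd k d) (cone x U) + ext (cone x) (sbd k U) = bv k U.
Proof.
rewrite sbd_set ext_sum.
under eq_bigr => v _ do rewrite ext_scl ext_bv.
rewrite /cone; case: ifP => xU.
  rewrite ext0 add0r (bigD1 x) //= big1 => [|v /andP [vU vx]]; last first.
    by rewrite !inE eq_sym vx xU /= scl0.
  rewrite addr0 !inE eqxx /= sclA lts_D1 sgsq scl1 setD1K //.
rewrite ext_scl ext_bv sbd_set (bigD1 x) ?setU11 //=.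
rewrite lts_U1x setU1K ?xU // scl_add sclA sgsq scl1 -addrA addrC -addrA.
rewrite addrA -[RHS]add0r; congr (_ + _).
rewrite scl_sum (eq_bigl (fun v => v \in U)) => [|v]; last first.
  rewrite !inE; case: (v =P x) => [->|/eqP nvx] /=; rewrite ?xU ?andbF ?andbT ?nvx //.
apply/eqP; rewrite addr_eq0 -sumrN; apply/eqP; apply: eq_bigr => v vU.
have vx : v != x by apply/eqP => e; move: vU; rewrite e xU.
rewrite !inE xU andbF sclA.
have -> : (x |: U) :\ v = x |: U :\ v.
  by apply/setP=> u; rewrite !inE; case: eqP => [->|]; rewrite ?eqxx ?(negbTE vx).
rewrite sclA -sclNc (lts_U1 _ (negbT xU)) (lts_D1v _ vU) !sgD; congr scl.
have: ((v < x)%N + (x < v)%N = 1)%N.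
  by case: (ltngtP v x) => // /val_inj e; move: vx; rewrite e eqxx.
case: (v < x)%N; case: (x < v)%N => //= _; rewrite /sg expr0 expr1; ring.
Qed.
End Comb.

End B.
Import B.

Module C.
Import GRing.Theory.
Local Open Scope ring_scope.
Set Implicit Arguments. Unset Strict Implicit. Unset Printing Implicit Defensive.

Fixpoint invn (t : seq nat) : nat :=
  if t is x :: t' then (count (fun y => y < x) t' + invn t')%N else 0%N.

Lemma count_nth (P : pred nat) (t : seq nat) :
  count P t = (\sum_(j < size t) P (nth 0%N t j))%N.
Proof.
elim: t => [|x t IH] /=; first by rewrite big_ord0.
by rewrite big_ord_recl /= IH.
Qed.

Lemma inversions_invn n (t : seq nat) : size t = n ->
  #|[set ij : 'I_n * 'I_n | (ij.1 < ij.2)%N && (nth 0%N t ij.2 < nth 0%N t ij.1)%N]|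
  = invn t.
Proof.
move=> <-; rewrite cardsE -sum1_card big_mkcond /=.
rewrite (eq_bigr (fun p : 'I_(size t) * 'I_(size t) =>
   ((p.1 < p.2)%N && (nth 0%N t p.2 < nth 0%N t p.1)%N : nat))); last first.
  by move=> [i j] _ /=; rewrite unfold_in /=; case: (_ && _).
rewrite (_ : (\sum_(p : 'I_(size t) * 'I_(size t))
     ((p.1 < p.2)%N && (nth 0%N t p.2 < nth 0%N t p.1)%N : nat))%N =
   (\sum_(i < size t) \sum_(j < size t) ((i < j)%N && (nth 0%N t j < nth 0%N t i)%N : nat))%N);
  last by rewrite pair_bigA.
elim: t => [|x t IH] /=; first by rewrite big_ord0.
rewrite big_ord_recl /= big_ord_recl /= -IH count_nth; congr (_ + _)%N.
apply: eq_bigr => i _; rewrite big_ord_recl /=; done.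
Qed.

Section Seqs.
Variable k : comPzRingType.
Variable d : nat.
Local Notation V := {ffun simp d -> k}.
Local Notation sg := (@sg k).
Local Notation cone := (@cone k d).

Definition inv (s : seq 'I_d) := invn (map val s).
Definition o (s : seq 'I_d) : V :=
  if uniq s then scl (sg (inv s)) (bv k [set x in s]) else 0.
Definition rem_at (i : nat) (s : seq 'I_d) := take i s ++ drop i.+1 s.
Definition D (s : seq 'I_d) : V :=
  \sum_(0 <= i < size s) scl (sg i) (o (rem_at i s)).

Lemma inv_cons x s : inv (x :: s) = (count (fun y : 'I_d => (y < x)%N) s + inv s)%N.
Proof. by rewrite /inv /= count_map. Qed.

Lemma inversions_inv s : inversions s = inv s.
Proof. by rewrite /inversions inversions_invn // size_map. Qed.

Lemma inv_sorted s : sorted (@ltO d) s -> inv s = 0%N.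
Proof.
elim: s => [//|x s IH] /=; rewrite (path_sortedE (@ltO_trans d)) => /andP [xs ss].
rewrite inv_cons IH // addn0 (@eq_in_count _ _ pred0) ?count_pred0 // => u us /=.
by move/allP: xs => /(_ u us); rewrite /ltO => h; rewrite ltnNge ltnW.
Qed.

Lemma o_verts (S : simp d) : o (verts S) = bv k S.
Proof.
by rewrite /o verts_uniq inv_sorted ?verts_sorted // set_verts scl1.
Qed.

Lemma lts_seq (s : seq 'I_d) x : uniq s ->
  lts [set y in s] x = count (fun y : 'I_d => (y < x)%N) s.
Proof.
move=> us; rewrite /lts -size_filter -card_seq ?filter_uniq //.
by apply: eq_card => u; rewrite !inE mem_filter andbC.
Qed.

Lemma o_cons x s : o (x :: s) = ext (cone x) (o s).
Proof.
rewrite /o /=; case us: (uniq s); last by rewrite andbF ext0.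
rewrite andbT ext_scl ext_bv /cone inE; case xs: (x \in s) => /=; first by rewrite scl0.
rewrite sclA inv_cons sgD mulrC lts_seq //; congr (scl _ (bv k _)).
by apply/setP=> u; rewrite !inE.
Qed.

Lemma sg_S i : sg i.+1 = - sg i.
Proof. by rewrite /B.sg exprS mulN1r. Qed.

Lemma D_cons x s : D (x :: s) = o s - ext (cone x) (D s).
Proof.
rewrite /D /= big_nat_recl // /rem_at /= drop0 /B.sg expr0 scl1; congr (_ + _).
rewrite ext_sum -sumrN; apply: eq_bigr => i _.
by rewrite o_cons ext_scl -sclNc -sg_S.
Qed.

Lemma cone_lin x (y : V) : ext (@sbd k d) (ext (cone x) y) + ext (cone x) (ext (@sbd k d) y) = y.
Proof.
rewrite !ext_comp -ext_fadd -[RHS]ext_id; apply: ext_eq => b.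
exact: cone_lemma.
Qed.

Lemma sbd0 : sbd k (set0 : simp d) = 0.
Proof. by rewrite sbd_set big_pred0 // => v; rewrite inE. Qed.

Lemma bd_o s : ext (@sbd k d) (o s) = D s.
Proof.
elim: s => [|x s IH].
  rewrite /o /= ext_scl ext_bv /D big_geq //.
  have -> : [set x in [::]] = (set0 : simp d) by apply/setP=> u; rewrite !inE.
  by rewrite sbd0 scl0.
rewrite o_cons D_cons -IH; apply/eqP; rewrite eq_sym subr_eq; apply/eqP.
by rewrite cone_lin.
Qed.
End Seqs.

End C.
Import C.

Module D.
Import GRing.Theory.
Local Open Scope ring_scope.
Set Implicit Arguments. Unset Strict Implicit. Unset Printing Implicit Defensive.

Section Join.
Variable k : comPzRingType.
Variable d : nat.
Local Notation V := {ffun simp d -> k}.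
Local Notation sg := (@sg k).
Local Notation o := (@o k d).
Local Notation D := (@D k d).
Local Notation inv := (@C.inv d).
Local Notation rem_at := (@rem_at d).

Definition cross (s t : seq 'I_d) :=
  (\sum_(x <- s) count (fun y : 'I_d => (y < x)%N) t)%N.

Lemma inv_cat s t : inv (s ++ t) = (inv s + inv t + cross s t)%N.
Proof.
elim: s => [|x s IH] /=; first by rewrite /cross big_nil addn0.
rewrite !inv_cons IH count_cat /cross big_cons; lia.
Qed.

Lemma cross_perm s s' t t' : perm_eq s s' -> perm_eq t t' -> cross s t = cross s' t'.
Proof.
move=> ps pt; rewrite /cross (perm_big _ ps); apply: eq_bigr => x _.
exact: permP.
Qed.

Lemma perm_verts (s : seq 'I_d) : uniq s -> perm_eq s (verts [set x in s]).
Proof.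
move=> us; apply: uniq_perm => //; first exact: verts_uniq.
by move=> x; rewrite mem_verts inE.
Qed.

Lemma sjoin_o (S T : simp d) : sjoin k (S, T) = o (verts S ++ verts T).
Proof.
rewrite /sjoin /o /= cat_uniq !verts_uniq /= andbT.
have -> : [disjoint S & T] = ~~ has (mem (verts S)) (verts T).
  rewrite -setI_eq0; apply/eqP/hasPn => [H x| H].
  - rewrite mem_verts => xT; apply/negP; rewrite /= mem_verts => xS.
    by have := in_set0 x; rewrite -H inE xS xT.
  - apply/setP => x; rewrite !inE; apply/negP => /andP [xS xT].
    by move: (H x); rewrite /= !mem_verts xT xS => /(_ isT).
case: ifP => // _; rewrite inversions_inv; congr (scl _ (bv k _)).
by apply/setP=> x; rewrite !inE mem_cat !mem_verts.
Qed.

Lemma o_cat s t : o (s ++ t) = ext (@sjoin k d) (tens (o s) (o t)).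
Proof.
rewrite /o; case us: (uniq s); last first.
  by rewrite cat_uniq us /= tens0l ext0.
case ut: (uniq t); last by rewrite cat_uniq ut !andbF tens0r ext0.
rewrite tens_scll tens_sclr tens_bv !ext_scl ext_bv sjoin_o.
rewrite /o !cat_uniq !verts_uniq us ut /= !andbT.
have E : has (fun x => x \in verts [set y in s]) (verts [set y in t]) = has (fun x => x \in s) t.
  rewrite (@eq_has_r _ _ t) => [|x]; last by rewrite mem_verts inE.
  by apply: eq_has => x; rewrite /= mem_verts inE.
rewrite E; case: (has _ t); first by rewrite /= !scl0.
rewrite /= !sclA -!sgD !inv_cat !(inv_sorted (verts_sorted _)).
rewrite (cross_perm (s' := s) (t' := t)); try by rewrite perm_sym perm_verts.
congr (scl (sg _) (bv k _)).
by apply/setP => x; rewrite !inE !mem_cat !mem_verts !inE.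
Qed.

Lemma rem_at_catl i s t : (i < size s)%N -> rem_at i (s ++ t) = rem_at i s ++ t.
Proof.
move=> h; rewrite /rem_at take_cat drop_cat h -catA; case: ltnP => h2 //.
have e : i.+1 = size s by lia.
by rewrite e subnn drop0 drop_size.
Qed.

Lemma rem_at_catr i s t : rem_at (i + size s) (s ++ t) = s ++ rem_at i t.
Proof.
rewrite /rem_at take_cat drop_cat ltnNge leq_addl /=.
have -> : ((i + size s).+1 < size s)%N = false by apply/negbTE; rewrite -ltnNge; lia.
have -> : ((i + size s).+1 - size s = i.+1)%N by lia.
by rewrite addnK catA.
Qed.

Lemma D_cat s t : D (s ++ t) =
  ext (@sjoin k d) (tens (D s) (o t)) + scl (sg (size s)) (ext (@sjoin k d) (tens (o s) (D t))).
Proof.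
rewrite /C.D size_cat (big_cat_nat _ (n := size s)) ?leq_addr //=.
congr (_ + _).
  rewrite tens_suml ext_sum; apply: eq_big_nat => i /andP [_ h].
  by rewrite rem_at_catl // o_cat tens_scll ext_scl.
rewrite -{1}(add0n (size s)) big_addn addKn tens_sumr ext_sum scl_sum.
apply: eq_bigr => i _; rewrite rem_at_catr o_cat tens_sclr ext_scl sclA -sgD addnC.
done.
Qed.

Lemma rem_at_uniq x0 i s : uniq s -> (i < size s)%N ->
  rem_at i s = filter (predC1 (nth x0 s i)) s.
Proof.
elim: s i => [//|y s IH] [|i] /= /andP [ys us] h.
  rewrite /rem_at /= drop0 eqxx /=; apply/esym/all_filterP/allP => z zs /=.
  by apply: contraNneq ys => <-.
rewrite /rem_at /= -/(rem_at i s) IH //.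
have -> : (y != nth x0 s i) by apply: contraNneq ys => ->; rewrite mem_nth.
done.
Qed.

Lemma verts_D1 (S : simp d) v : verts (S :\ v) = filter (predC1 v) (verts S).
Proof.
rewrite /verts /enum_mem -!filter_predI; apply: eq_filter => u /=.
by rewrite !inE andbT.
Qed.

Lemma D_verts (S : simp d) : D (verts S) = sbd k S.
Proof.
case e: (verts S) => [|x0 t].
  by rewrite /sbd e big_nil /C.D big_geq.
rewrite -e /sbd (big_nth x0) /C.D; apply: eq_big_nat => i /andP [_ h].
by rewrite index_uniq ?verts_uniq // (rem_at_uniq x0) ?verts_uniq // -verts_D1 o_verts.
Qed.

Lemma dDelta (p : simp d * simp d) :
  ext (@sbd k d) (sjoin k p) = ext (@sjoin k d) (bd2 (@sdeg d) (@sbd k d) p).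
Proof.
case: p => S T; rewrite sjoin_o bd_o D_cat !D_verts !o_verts size_verts.
by rewrite /bd2 /= ext_add ext_scl.
Qed.
End Join.

End D.
Import D.

Module E.
Import GRing.Theory.
Local Open Scope ring_scope.
Set Implicit Arguments. Unset Strict Implicit. Unset Printing Implicit Defensive.

Lemma zab (k : comPzRingType) (B : finType) (a b c m q r z : {ffun B -> k}) : q + r = b - z ->
  a - (b - c) - (m - q) + (m - c + r) = a - z.
Proof.
move=> h; apply/ffunP => p; have hp := congr1 (fun f : {ffun B -> k} => f p) h.
rewrite /= !ffunE in hp *.
have -> : r p = b p - z p - q p by rewrite -hp; ring.
ring.
Qed.

Section Lin2.
Variable k : comPzRingType.
Lemma ext_tensl (B1 B2 B3 : finType) (f : B1 -> {ffun B2 -> k}) y (z : {ffun B3 -> k}) :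
  ext (fun a => tens (f a) z) y = tens (ext f y) z.
Proof.
rewrite !extE tens_suml; apply: eq_bigr => a _; by rewrite tens_scll.
Qed.
Lemma ext_tensR (B1 B2 B3 : finType) (f : B1 -> {ffun B2 -> k}) y (u : {ffun B3 -> k}) :
  ext (fun b => tens u (f b)) y = tens u (ext f y).
Proof.
rewrite !extE tens_sumr; apply: eq_bigr => a _; by rewrite tens_sclr.
Qed.
Lemma ext_tensr (B2 B3 : finType) (z : {ffun B2 -> k}) (u : {ffun B3 -> k}) :
  ext (fun b => tens u (bv k b)) z = tens u z.
Proof. by rewrite ext_tensR ext_id. Qed.
End Lin2.

Section Mu.
Variable k : comPzRingType.
Variable d : nat.
Local Notation V := {ffun simp d -> k}.
Local Notation V2 := {ffun simp d * simp d -> k}.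
Local Notation sg := (@sg k).
Local Notation o := (@o k d).
Local Notation D := (@D k d).
Local Notation inv := (@C.inv d).
Local Notation rem_at := (@rem_at d).
Local Notation cone := (@cone k d).
Local Notation bd2' := (bd2 (@sdeg d) (@sbd k d)).

Definition M (s : seq 'I_d) : V2 :=
  \sum_(0 <= i < size s) scl (sg i) (tens (o (take i.+1 s)) (o (drop i s))).
Definition Cx x (y : V2) : V2 := ext (fun p : simp d * simp d => tens (cone x p.1) (bv k p.2)) y.

Lemma Cx_tens x (y z : V) : Cx x (tens y z) = tens (ext (cone x) y) z.
Proof.
rewrite /Cx ext_tens /=.
rewrite (@ext_eq _ _ _ _ (fun a => tens (cone x a) z)) ?ext_tensl // => a.
exact: ext_tensr.
Qed.

Lemma o1 x : o [:: x] = bv k [set x].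
Proof.
rewrite /o /= /C.inv /= /B.sg expr0 scl1; congr (bv k _).
by apply/setP=> u; rewrite !inE ?orbF.
Qed.

Lemma o0 : o [::] = bv k set0.
Proof.
rewrite /o /= /C.inv /= /B.sg expr0 scl1; congr (bv k _);
try by apply/setP=> u; rewrite !inE.
Qed.

Lemma M_cons x s : M (x :: s) = tens (bv k [set x]) (o (x :: s)) - Cx x (M s).
Proof.
rewrite /M /= big_nat_recl // drop0 /= take0 o1 /B.sg expr0 scl1; congr (_ + _).
rewrite /Cx ext_sum -sumrN; apply: eq_bigr => i _.
rewrite o_cons ext_scl -/(Cx _ _) Cx_tens exprS mulN1r sclNc.
done.
Qed.

Lemma bd2_tensl (U : simp d) (y : V) :
  ext bd2' (tens (bv k U) y) = tens (sbd k U) y + scl (sg #|U|) (tens (bv k U) (ext (@sbd k d) y)).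
Proof.
rewrite ext_tens /= ext_bv /bd2 /= ext_fadd ext_tensr ext_fscl ext_tensR.
done.
Qed.

Lemma bd2_tensl_scl c (U : simp d) (y : V) :
  ext bd2' (tens (scl c (bv k U)) y) = scl c (ext bd2' (tens (bv k U) y)).
Proof. by rewrite tens_scll ext_scl. Qed.

Lemma bd2_cone x (U W : simp d) :
  ext bd2' (tens (cone x U) (bv k W)) =
  tens (ext (@sbd k d) (cone x U)) (bv k W) - scl (sg #|U|) (tens (cone x U) (sbd k W)).
Proof.
rewrite /cone; case: ifP => xU.
  by rewrite !tens0l !ext0 tens0l; apply/ffunP => p; rewrite !ffunE mulr0 subr0.
rewrite tens_scll ext_scl bd2_tensl !ext_scl !ext_bv.
rewrite cardsU1 xU /= add1n /B.sg exprS.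
apply/ffunP => p; rewrite !ffunE; ring.
Qed.

Lemma bd2_C_basis x (U W : simp d) :
  ext bd2' (tens (cone x U) (bv k W)) + Cx x (bd2' (U, W)) = bv k (U, W).
Proof.
rewrite bd2_cone /bd2 /= /Cx ext_add ext_scl -!/(Cx _ _) !Cx_tens ext_bv.
rewrite -tens_bv -[in RHS](cone_lemma k x U) tens_addl.
apply/ffunP => p; rewrite !ffunE /sdeg /B.sg; ring.
Qed.

Lemma bd2_C x (y : V2) : ext bd2' (Cx x y) + Cx x (ext bd2' y) = y.
Proof.
rewrite /Cx !ext_comp -ext_fadd -[RHS]ext_id; apply: ext_eq => [[U W]] /=.
exact: bd2_C_basis.
Qed.

Definition Sig (s : seq 'I_d) : V2 :=
  \sum_(0 <= i < size s) scl (sg i) (M (rem_at i s)).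

Lemma Cx_add x (a b : V2) : Cx x (a + b) = Cx x a + Cx x b.
Proof. exact: ext_add. Qed.
Lemma Cx_opp x (a : V2) : Cx x (- a) = - Cx x a.
Proof. exact: extN. Qed.

Lemma Sig_cons x s :
  Sig (x :: s) = M s - tens (bv k [set x]) (ext (cone x) (D s)) + Cx x (Sig s).
Proof.
rewrite /Sig /= big_nat_recl // /rem_at /= drop0 /B.sg expr0 scl1 -addrA; congr (_ + _).
rewrite /C.D ext_sum tens_sumr -sumrN /Cx ext_sum -big_split /=.
apply: eq_bigr => i _; rewrite -/(rem_at i s) M_cons.
rewrite ext_scl -/(Cx _ (scl _ _)) /Cx ext_scl -/(Cx _ _) o_cons tens_sclr.
set A := tens _ _; set B := Cx _ _.
apply/ffunP => p; rewrite !ffunE /B.sg exprS; ring.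
Qed.

Lemma sbd1 x : sbd k [set x] = bv k (set0 : simp d).
Proof.
rewrite sbd_set big_set1 setDv /lts.
have -> : [set u in [set x] | (u < x)%N] = set0.
  by apply/setP=> u; rewrite !inE; case: eqP => [->|]; rewrite ?ltnn ?andbF.
by rewrite cards0 /B.sg expr0 scl1.
Qed.

Lemma cone0 x : cone x set0 = bv k [set x].
Proof.
rewrite /cone inE /lts.
have -> : [set u in (set0 : simp d) | (u < x)%N] = set0 by apply/setP=> u; rewrite !inE.
by rewrite cards0 /B.sg expr0 scl1 setU0.
Qed.

Lemma E_id s :
  ext bd2' (M s) + Sig s = tens (bv k set0) (o s) - tens (o s) (bv k set0).
Proof.
elim: s => [|x s IH].
  by rewrite /M /Sig !big_geq // ext0 add0r o0 subrr.
rewrite M_cons Sig_cons ext_add extN bd2_tensl sbd1 cards1 bd_o D_cons.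
have h2 := bd2_C x (M s).
have -> : ext bd2' (Cx x (M s)) = M s - Cx x (ext bd2' (M s)).
  by apply/eqP; rewrite eq_sym subr_eq h2.
have h3 : Cx x (ext bd2' (M s)) + Cx x (Sig s) =
          tens (bv k [set x]) (o s) - tens (o (x :: s)) (bv k set0).
  rewrite -Cx_add IH Cx_add Cx_opp !Cx_tens ext_bv cone0 o_cons //.
rewrite /B.sg expr1 sclNc scl1 tens_addr tensNr opprB.
have := zab (tens (bv k set0) (o (x :: s)))
   (tens (bv k [set x]) (ext (cone x) (D s))) (M s) h3.
rewrite opprB => <-.
done.
Qed.
End Mu.

End E.
Import E.

Module F.
Import GRing.Theory.
Local Open Scope ring_scope.
Set Implicit Arguments. Unset Strict Implicit. Unset Printing Implicit Defensive.

Section SMu.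
Variable k : comPzRingType.
Variable d : nat.
Local Notation V := {ffun simp d -> k}.
Local Notation V2 := {ffun simp d * simp d -> k}.
Local Notation sg := (@sg k).
Local Notation o := (@o k d).
Local Notation D := (@D k d).
Local Notation M := (@M k d).
Local Notation Sig := (@Sig k d).
Local Notation rem_at := (@rem_at d).
Local Notation bd2' := (bd2 (@sdeg d) (@sbd k d)).

Lemma verts_filter (S : simp d) (P : pred 'I_d) :
  verts [set u in S | P u] = filter P (verts S).
Proof.
rewrite /verts /enum_mem -!filter_predI; apply: eq_filter => u /=.
by rewrite !inE !andbT andbC.
Qed.

Lemma take_sorted x0 (s : seq 'I_d) i : sorted (@ltO d) s -> (i < size s)%N ->
  take i.+1 s = filter (fun u : 'I_d => (u <= nth x0 s i)%N) s.
Proof.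
elim: s i => [//|y s IH] [|i] /=; rewrite (path_sortedE (@ltO_trans d)) => /andP [ys ss] h.
  rewrite take0 leqnn (@eq_in_filter _ _ pred0) ?filter_pred0 // => u us /=.
  by move/allP: ys => /(_ u us); rewrite /ltO => hu; rewrite leqNgt hu.
rewrite IH //.
have -> : (y <= nth x0 s i)%N by move/allP: ys => /(_ (nth x0 s i) (mem_nth x0 h)) /ltnW.
done.
Qed.

Lemma drop_sorted x0 (s : seq 'I_d) i : sorted (@ltO d) s -> (i < size s)%N ->
  drop i s = filter (fun u : 'I_d => (nth x0 s i <= u)%N) s.
Proof.
elim: s i => [//|y s IH] [|i] /=; rewrite (path_sortedE (@ltO_trans d)) => /andP [ys ss] h.
  rewrite leqnn; congr (_ :: _); apply/esym/all_filterP/allP => u us /=.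
  by move/allP: ys => /(_ u us) /ltnW.
rewrite IH //.
have -> : (nth x0 s i <= y)%N = false.
  by move/allP: ys => /(_ (nth x0 s i) (mem_nth x0 h)); rewrite /ltO ltnNge => /negbTE.
done.
Qed.

Lemma smu_M (S : simp d) : smu k S = M (verts S).
Proof.
case e: (verts S) => [|x0 t].
  by rewrite /smu e big_nil /E.M big_geq.
rewrite -e /smu (big_nth x0) /E.M; apply: eq_big_nat => i /andP [_ h].
rewrite index_uniq ?verts_uniq //.
by rewrite (take_sorted x0) ?verts_sorted // (drop_sorted x0) ?verts_sorted //
  -!verts_filter !o_verts.
Qed.

Lemma Sig_verts (S : simp d) : Sig (verts S) = ext (@smu k d) (sbd k S).
Proof.
rewrite /sbd ext_sum.
case e: (verts S) => [|x0 t].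
  by rewrite big_nil /Sig big_geq.
rewrite -e (big_nth x0) /Sig; apply: eq_big_nat => i /andP [_ h].
rewrite index_uniq ?verts_uniq // (rem_at_uniq x0) ?verts_uniq // -verts_D1.
by rewrite ext_scl ext_bv smu_M.
Qed.

Lemma dmu (S : simp d) :
  ext bd2' (smu k S) + ext (@smu k d) (sbd k S) =
  tens (seps k d tt) (bv k S) - tens (bv k S) (seps k d tt).
Proof. by rewrite smu_M -Sig_verts E_id o_verts. Qed.
End SMu.

End F.
Import F.

Module G.
Import GRing.Theory.
Local Open Scope ring_scope.
Set Implicit Arguments. Unset Strict Implicit. Unset Printing Implicit Defensive.

Section Nat.
Variable k : comPzRingType.
Variables d e : nat.
Variable f : 'I_d -> 'I_e.
Hypothesis hf : {homo f : x y / (x <= y)%N}.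

Lemma imset_seq (s : seq 'I_d) : f @: [set x in s] = [set y in map f s].
Proof.
apply/setP => y; rewrite inE; apply/imsetP/mapP => [[x]|[x]]; rewrite ?inE => xs ->;
  by exists x; rewrite ?inE.
Qed.

Lemma inv_map (s : seq 'I_d) : uniq (map f s) -> C.inv (map f s) = C.inv s.
Proof.
elim: s => [//|x s IH] /= /andP [fxs us].
rewrite !inv_cons IH // count_map; congr (_ + _)%N.
apply: eq_in_count => z zs /=.
have fz : f z != f x by apply: contraNneq fxs => <-; apply: map_f.
case: (ltngtP z x) => h.
- have := hf (ltnW h); rewrite leq_eqVlt => /orP [/eqP/val_inj e'|//].
  by rewrite e' eqxx in fz.
- by rewrite ltnNge hf // ltnW.
- by move/val_inj: h => h; rewrite h eqxx in fz.
Qed.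

Lemma sfun_o (s : seq 'I_d) : ext (sfun k f) (o k s) = o k (map f s).
Proof.
rewrite {1}/o; case us: (uniq s); last first.
  rewrite ext0 /o; case: ifP => // /map_uniq; by rewrite us.
rewrite ext_scl ext_bv /sfun imset_seq (card_seq us) /o.
case um: (uniq (map f s)).
  by rewrite (card_seq um) size_map eqxx inv_map.
rewrite cardsE; case: eqP => [h|_]; last by rewrite scl0.
by move: um; rewrite -(size_map f s) in h; move/card_uniqP: h => ->.
Qed.

Lemma sfun_bv (S : simp d) : sfun k f S = o k (map f (verts S)).
Proof. by rewrite -sfun_o o_verts ext_bv. Qed.

Lemma nat_eps : ext (sfun k f) (seps k d tt) = seps k e tt.
Proof.
by rewrite /seps ext_bv /sfun imset0 !cards0.
Qed.

Lemma nat_join (S T : simp d) :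
  ext (@sjoin k e) (tens (sfun k f S) (sfun k f T)) = ext (sfun k f) (sjoin k (S, T)).
Proof. by rewrite !sfun_bv -o_cat sjoin_o sfun_o map_cat. Qed.

Definition leO : rel 'I_e := fun a b => (a <= b)%N.

Lemma uniq_take_drop (x0 : 'I_e) (t : seq 'I_e) i : sorted leO t -> (i < size t)%N ->
  uniq (take i.+1 t) -> uniq (drop i t) -> uniq t.
Proof.
move=> st hi ut ud.
have tr : transitive leO by move=> a b c; apply: leq_trans.
have rf : reflexive leO by move=> a; apply: leqnn.
rewrite -(cat_take_drop i.+1 t) cat_uniq ut /=.
rewrite (drop_nth x0 hi) /= in ud; case/andP: ud => ad ud.
rewrite ud andbT; apply/hasPn => y yd; apply/negP => yt.
have h1 : (y <= nth x0 t i)%N.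
  case/(nthP x0): yt => j; rewrite size_take_min => hj <-.
  move: hj; rewrite leq_min => /andP [hj1 hj2].
  rewrite nth_take //.
  by apply: (sorted_leq_nth tr rf) => //; rewrite ?inE.
have h2 : (nth x0 t i <= y)%N.
  case/(nthP x0): yd => j; rewrite size_drop => hj <-.
  rewrite nth_drop; apply: (sorted_leq_nth tr rf) => //; rewrite ?inE //.
    by rewrite -ltn_subRL.
  by rewrite leqW // leq_addr.
have : y = nth x0 t i by apply/val_inj/eqP; rewrite eqn_leq h1 h2.
by move=> ey; move: ad; rewrite -ey yd.
Qed.

Lemma ext_tens2 (g : simp d -> {ffun simp e -> k}) (y z : {ffun simp d -> k}) :
  ext (fun p : simp d * simp d => tens (g p.1) (g p.2)) (tens y z) = tens (ext g y) (ext g z).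
Proof.
rewrite ext_tens /=.
rewrite (@ext_eq _ _ _ _ (fun a => tens (g a) (ext g z))) ?ext_tensl // => a.
exact: ext_tensR.
Qed.

Lemma sorted_map_le (s : seq 'I_d) : sorted (@ltO d) s -> sorted leO (map f s).
Proof.
move=> ss; rewrite sorted_map; apply: (sub_sorted _ ss) => a b.
rewrite /ltO /leO /= => h; exact: hf (ltnW h).
Qed.

Lemma sorted_map_lt (s : seq 'I_d) : sorted (@ltO d) s -> uniq (map f s) ->
  sorted (@ltO e) (map f s).
Proof.
move=> ss um.
have : sorted ltn (map val (map f s)).
  rewrite ltn_sorted_uniq_leq (map_inj_uniq val_inj) um /= sorted_map.
  exact: sorted_map_le.
by rewrite sorted_map.
Qed.

Lemma smu_o_map (s : seq 'I_d) : sorted (@ltO d) s ->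
  ext (@smu k e) (o k (map f s)) = M k (map f s).
Proof.
move=> ss; case um: (uniq (map f s)).
  have E : verts [set y in map f s] = map f s.
    apply: (irr_sorted_eq (@ltO_trans e) (@ltO_irr e)).
    - exact: verts_sorted.
    - exact: sorted_map_lt.
    - by move=> y; rewrite mem_verts inE.
  by rewrite -{1}E o_verts ext_bv smu_M E.
rewrite {1}/o um ext0.
case E: (map f s) => [|x0 t']; first by rewrite /M big_geq.
rewrite -E /M big_nat big1 // => i /andP [_ hi].
have sl := sorted_map_le ss.
case ut: (uniq (take i.+1 (map f s))); last by rewrite {1}/o ut tens0l scl0.
case ud: (uniq (drop i (map f s))); last by rewrite [o k (drop _ _)]/o ud tens0r scl0.
by move: um; rewrite (uniq_take_drop x0 sl hi ut ud).
Qed.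

Lemma nat_mu (S : simp d) :
  ext (fun p : simp d * simp d => tens (sfun k f p.1) (sfun k f p.2)) (smu k S)
  = ext (@smu k e) (sfun k f S).
Proof.
rewrite sfun_bv smu_o_map ?verts_sorted // smu_M /M ext_sum size_map.
apply: eq_bigr => i _; rewrite ext_scl ext_tens2 !sfun_o map_take map_drop.
done.
Qed.
End Nat.

End G.
Import G.

Module H.
Import GRing.Theory.
Local Open Scope ring_scope.

Lemma bv_neq0 (k : comPzRingType) (B : finType) (b b' : B) : bv k b b' != 0 -> b' = b.
Proof. by rewrite ffunE; case: (b' =P b) => // _; rewrite /= mulr0n eqxx. Qed.

Lemma verts0 d : verts (set0 : simp d) = [::].
Proof. by apply/eqP; rewrite -size_eq0 size_verts cards0. Qed.

Lemma main_part1 (k : comPzRingType) (d : nat) :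
  opp_S_bialgebra (@sdeg d) (@sbd k d) (@seps k d) (@sjoin k d) (@smu k d).
Proof.
split; [|split].
- split.
  + move=> [] b' /bv_neq0 ->; by rewrite /sdeg cards0.
  + move=> [S T] b'; rewrite /sjoin /=; case: ifP => dST; last by rewrite ffunE eqxx.
    rewrite ffunE => h; have: bv k (S :|: T) b' != 0.
      by apply: contraNneq h => ->; rewrite mulr0.
    move/bv_neq0 => ->; rewrite /sdeg cardsU.
    move: dST; rewrite -setI_eq0 => /eqP ->; rewrite cards0 subn0 addn0 //.
  + move=> S [A B]; rewrite /smu sum_ffunE => h.
    have [v vS hv] : exists2 v, v \in verts S &
        (A, B) == ([set u in S | (u <= v)%N], [set u in S | (v <= u)%N]).
      apply/hasP; apply: contraNT h => /hasPn hn.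
      rewrite big1_seq // => v /hn hv; rewrite !ffunE /=.
      move: hv; rewrite xpair_eqE negb_and => /orP [] /negbTE ->;
        by rewrite ?mul0r ?mulr0.
    move: hv; rewrite xpair_eqE => /andP [/eqP -> /eqP ->].
    rewrite mem_verts in vS; rewrite /sdeg -cardsUI.
    have -> : [set u in S | (u <= v)%N] :|: [set u in S | (v <= u)%N] = S.
      apply/setP=> u; rewrite !inE -andb_orr leq_total andbT //.
    have -> : [set u in S | (u <= v)%N] :&: [set u in S | (v <= u)%N] = [set v].
      apply/setP=> u; rewrite !inE; case: (u =P v) => [->|nuv]; rewrite ?vS ?leqnn //.
      apply/negP => /andP [/andP [_ h1] /andP [_ h2]]; apply: nuv; apply: val_inj.
      by apply/eqP; rewrite eqn_leq h1 h2.
    by rewrite cards1 addn1.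
- split.
  + by rewrite /seps ext_bv sbd0.
  + exact: dDelta.
  + exact: dmu.
- split.
  + by rewrite /seps ext_bv /smu verts0 big_nil.
  + move=> b; rewrite /seps tens_bv ext_bv sjoin_o verts0 /= o_verts //.
  + move=> b; rewrite /seps tens_bv ext_bv sjoin_o verts0 cats0 o_verts //.
Qed.


End H.
Import H.

Theorem theoremB2 (k : comPzRingType) :
  (forall d : nat,
     opp_S_bialgebra (@sdeg d) (@sbd k d) (@seps k d) (@sjoin k d) (@smu k d))
  /\
  (forall (d e : nat) (f : 'I_d -> 'I_e),
     {homo f : x y / (x <= y)%N} ->
     [/\ ext (sfun k f) (seps k d tt) = seps k e tt,
         (forall S T : simp d,
            ext (@sjoin k e) (tens (sfun k f S) (sfun k f T))
            = ext (sfun k f) (sjoin k (S, T))) &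
         (forall S : simp d,
            ext (fun p => tens (sfun k f p.1) (sfun k f p.2)) (smu k S)
            = ext (@smu k e) (sfun k f S))]).
Proof.
split; first exact: main_part1.
move=> d e f hf; split.
- exact: nat_eps.
- exact: nat_join.
- exact: nat_mu.
Qed.
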